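(* Let $G=(V,E)$ be a finite simple graph and $e\in E$. Let $G-e$ denote the graph obtained from $G$ by removing the edge $e$ (keeping all vertices). Then $$\gamma_{coe}(G)-2\leq \gamma_{coe}(G-e)\leq \gamma_{coe}(G)+2.$$
   Context: All graphs are finite and simple. For a graph $G=(V,E)$ and $v\in V$, $\deg(v)$ is the number of neighbours of $v$. A set $D\subseteq V$ is a dominating set if every vertex of $V\setminus D$ is adjacent to at least one vertex of $D$. A dominating set $D$ is a co-even dominating set if $\deg(v)$ is even for every $v\in V\setminus D$ (degrees taken in the graph under consideration). The co-even domination number $\gamma_{coe}(G)$ is the minimum cardinality of a co-even dominating set of $G$. *)

(* Defs.v *)
From mathcomp Require Import all_boot.
Set Implicit Arguments. Unset Strict Implicit. Unset Printing Implicit Defensive.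

Definition simple_graph (T : finType) (g : rel T) : Prop :=
  symmetric g /\ irreflexive g.

Definition deg (T : finType) (g : rel T) (v : T) : nat := #|[set w | g v w]|.

Definition dominating (T : finType) (g : rel T) (D : {set T}) : bool :=
  [forall v, (v \notin D) ==> [exists u in D, g v u]].

Definition coeven_dominating (T : finType) (g : rel T) (D : {set T}) : bool :=
  dominating g D && [forall v, (v \notin D) ==> ~~ odd (deg g v)].

(* The whole vertex set is always co-even dominating, so the minimum exists;
   #|T| is used as the neutral element of the min. *)
Definition gamma_coe (T : finType) (g : rel T) : nat :=
  \big[minn/#|T|]_(D : {set T} | coeven_dominating g D) #|D|.

Definition remove_edge (T : finType) (g : rel T) (a b : T) : rel T :=
  fun x y => g x y && ~~ (((x == a) && (y == b)) || ((x == b) && (y == a))).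

(* Main.v *)
Require Import Defs.
From mathcomp Require Import all_boot.

Lemma coe_setT (T : finType) (g : rel T) : coeven_dominating g setT.
Proof.
by apply/andP; split; [apply/forallP=> v; rewrite in_setT | apply/forallP=> v; rewrite in_setT].
Qed.

Lemma bigmin_seq_le (I : eqType) (r : seq I) (P : pred I) (F : I -> nat) k D :
  D \in r -> P D -> \big[minn/k]_(i <- r | P i) F i <= F D.
Proof.
elim: r => [|x r IH] //; rewrite inE big_cons => /orP [/eqP <- HP | Hr HP].
- by rewrite HP geq_minl.
- case: (P x); last exact: IH.
  by apply: leq_trans (geq_minr _ _) (IH Hr HP).
Qed.

Lemma gamma_le (T : finType) (g : rel T) (D : {set T}) :
  coeven_dominating g D -> gamma_coe g <= #|D|.
Proof.
move=> HD; rewrite /gamma_coe.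
exact: (@bigmin_seq_le _ (index_enum {set T}) _ (fun D => #|D|) _ D (mem_index_enum D) HD).
Qed.

Lemma gamma_attained (T : finType) (g : rel T) :
  exists D, coeven_dominating g D /\ #|D| = gamma_coe g.
Proof.
rewrite /gamma_coe.
apply: (big_ind (fun n => exists D, coeven_dominating g D /\ #|D| = n)).
- by exists setT; split; [apply: coe_setT | rewrite cardsT].
- move=> x y Hx Hy; rewrite /minn; by case: ltnP.
- by move=> D HD; exists D.
Qed.

Lemma coe_transfer (T : finType) (g h : rel T) (a b : T) (D : {set T}) :
  (forall x y, x != a -> x != b -> h x y = g x y) ->
  coeven_dominating g D -> coeven_dominating h (D :|: [set a; b]).
Proof.
move=> Hgh /andP [/forallP Hdom /forallP Hev]; apply/andP; split.
- apply/forallP=> v; apply/implyP; rewrite !inE negb_or => /andP [HvD].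
  rewrite negb_or => /andP [Hva Hvb].
  have /existsP [u /andP [HuD Hvu]] := implyP (Hdom v) HvD.
  by apply/existsP; exists u; rewrite !inE HuD /= Hgh.
- apply/forallP=> v; apply/implyP; rewrite !inE negb_or => /andP [HvD].
  rewrite negb_or => /andP [Hva Hvb].
  have := implyP (Hev v) HvD.
  have E : [set w | h v w] = [set w | g v w] by apply/setP=> w; rewrite !inE Hgh.
  by rewrite /deg E.
Qed.

Lemma gamma_step (T : finType) (g h : rel T) (a b : T) :
  (forall x y, x != a -> x != b -> h x y = g x y) ->
  gamma_coe h <= gamma_coe g + 2.
Proof.
move=> Hgh; have [D [HD <-]] := @gamma_attained _ g.
apply: leq_trans (gamma_le _ _ _ (coe_transfer _ _ _ _ _ _ Hgh HD)) _.
apply: leq_trans (leq_card_setU D [set a; b]) _; rewrite leq_add2l.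
apply: leq_trans (leq_card_setU [set a] [set b]) _; by rewrite !cards1.
Qed.

Theorem mainTheorem3 (T : finType) (g : rel T) (a b : T) :
  simple_graph g -> g a b ->
  gamma_coe g - 2 <= gamma_coe (remove_edge g a b) /\
  gamma_coe (remove_edge g a b) <= gamma_coe g + 2.
Proof.
move=> _ _.
have H : forall x y, x != a -> x != b -> remove_edge g a b x y = g x y.
  by move=> x y /negbTE Ha /negbTE Hb; rewrite /remove_edge Ha Hb /= andbT.
split.
- rewrite leq_subLR addnC; apply: (gamma_step _ _ _ a b) => x y Ha Hb; by rewrite H.
- exact: (gamma_step _ _ _ a b).
Qed.
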